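(* Let $K$ be a field of characteristic zero, $x=(x_1,\dots,x_n)$, and let $f,h\in K[x]$ with $\deg(f-h)=1$. If there exists a vector $v\in K^n$ such that $\mathcal{J}h\cdot v=0\neq\mathcal{J}f\cdot v$, then $f$ is a tame coordinate.
   Context: $\mathcal{J}h=(\partial h/\partial x_1,\dots,\partial h/\partial x_n)$ is the Jacobian (row vector). A polynomial $f$ is a tame coordinate if it is a component of a tame automorphism, i.e. of an invertible polynomial map that is a composition of invertible linear (affine) maps and elementary maps $(x_1+p(x_2,\dots,x_n),x_2,\dots,x_n)$. *)

(* Defs.v *)
From HB Require Import structures.
From mathcomp Require Import all_boot all_order all_algebra.
From mathcomp Require Import mpoly.
Set Implicit Arguments. Unset Strict Implicit. Unset Printing Implicit Defensive.
Import GRing.Theory.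
Local Open Scope ring_scope.

Definition polymap (K : fieldType) (n : nat) := n.-tuple {mpoly K[n]}.

Definition pm_id (K : fieldType) (n : nat) : polymap K n :=
  [tuple 'X_i | i < n].

Definition pm_comp (K : fieldType) (n : nat) (F G : polymap K n) : polymap K n :=
  [tuple (tnth F j) \mPo G | j < n].

Definition affine_auto (K : fieldType) (n : nat) (F : polymap K n) : Prop :=
  exists (A : 'M[K]_n) (b : 'I_n -> K), A \in unitmx /\
    forall j : 'I_n, tnth F j = \sum_(k < n) A j k *: 'X_k + (b j)%:MP.

(* elementary maps (x_1 + p(x_2,...,x_n), x_2, ..., x_n) *)
Definition elementary_map (K : fieldType) (n : nat) (F : polymap K n) : Prop :=
  exists (i0 : 'I_n) (p : {mpoly K[n]}),
    val i0 = 0%N /\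
    (forall m, m \in msupp p -> m i0 = 0%N) /\
    tnth F i0 = 'X_i0 + p /\
    (forall j : 'I_n, j != i0 -> tnth F j = 'X_j).

Definition tame_auto (K : fieldType) (n : nat) (F : polymap K n) : Prop :=
  exists s : seq (polymap K n),
    (forall G, G \in s -> affine_auto G \/ elementary_map G) /\
    F = foldr (@pm_comp K n) (pm_id K n) s.

Definition tame_coordinate (K : fieldType) (n : nat) (f : {mpoly K[n]}) : Prop :=
  exists (F : polymap K n) (i : 'I_n), tame_auto F /\ tnth F i = f.

Definition tdeg (K : fieldType) (n : nat) (p : {mpoly K[n]}) : nat := (msize p).-1.

(* Jacobian (row vector) times column vector v *)
Definition jac_mul (K : fieldType) (n : nat) (h : {mpoly K[n]}) (v : 'cV[K]_n)
  : {mpoly K[n]} := \sum_(i < n) v i 0 *: h^`M(i).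

(* Main.v *)
Require Import Defs.
From HB Require Import structures.
From mathcomp Require Import all_boot all_order all_algebra.
From mathcomp Require Import mpoly.
From mathcomp Require Import ring fingroup perm.
Import GRing.Theory.
Local Open Scope ring_scope.

Section Aux.
Variables (K : fieldType) (n : nat).
Implicit Types (p q : {mpoly K[n]}) (G H : n.-tuple {mpoly K[n]}).

Lemma comp_assoc p G H :
  (p \mPo G) \mPo H = p \mPo [tuple (tnth G i \mPo H) | i < n].
Proof.
rewrite [p \mPo G]comp_mpolyEX [RHS]comp_mpolyEX raddf_sum /=; apply: eq_bigr => m _.
rewrite !comp_mpolyZ !comp_mpolyX rmorph_prod /=; congr (_ *: _).
by apply: eq_bigr => i _; rewrite rmorphXn /= tnth_mktuple.
Qed.

Lemma mderivXU (k j : 'I_n) : ('X_k : {mpoly K[n]})^`M(j) = ((k == j)%:R)%:MP.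
Proof.
rewrite mderivX mnm1E; case: eqP => [->|_].
  have -> : (U_(j) - U_(j) = 0)%MM by apply/mnmP => l; rewrite mnmBE subnn mnm0E.
  by rewrite mpolyX0 scale1r mpolyC1.
by rewrite scale0r mpolyC0.
Qed.

Definition cr G p := forall j,
  (p \mPo G)^`M(j) = \sum_i (p^`M(i) \mPo G) * (tnth G i)^`M(j).

Lemma chain G p : cr G p.
Proof.
have cr1 : cr G 1.
  move=> j; rewrite comp_mpoly1 -mpolyC1 mderivC big1 // => i _.
  by rewrite mderivC comp_mpoly0 mul0r.
have crD p1 q1 : cr G p1 -> cr G q1 -> cr G (p1 + q1).
  move=> hp hq j; rewrite raddfD mderivD hp hq -big_split; apply: eq_bigr => i _.
  by rewrite mderivD raddfD mulrDl.
have crZ c p1 : cr G p1 -> cr G (c *: p1).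
  move=> hp j; rewrite comp_mpolyZ mderivZ hp scaler_sumr; apply: eq_bigr => i _.
  by rewrite mderivZ comp_mpolyZ scalerAl.
have crM p1 q1 : cr G p1 -> cr G q1 -> cr G (p1 * q1).
  move=> hp hq j; rewrite rmorphM mderivM hp hq mulr_suml mulr_sumr -big_split.
  apply: eq_bigr => i _; rewrite mderivM rmorphD !rmorphM /=; ring.
have crX i : cr G 'X_i.
  move=> j; rewrite comp_mpolyXU -tnth_nth (bigD1 i) //= big1 => [|l li].
    by rewrite mderivXU eqxx mpolyC1 comp_mpoly1 mul1r addr0.
  by rewrite mderivXU eq_sym (negbTE li) mpolyC0 comp_mpoly0 mul0r.
elim/mpolyind: p => [|c m p _ _ hp].
  by rewrite -(scale0r 1); apply: crZ.
apply: crD => //; apply: crZ; rewrite mpolyXE_id.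
apply: (big_ind (cr G)) => // i _; elim: (m i) => [|k IH]; first by rewrite expr0.
by rewrite exprS; apply: crM.
Qed.


Definition lin (A : 'M[K]_n) : n.-tuple {mpoly K[n]} :=
  [tuple \sum_(k < n) A i k *: 'X_k | i < n].

Lemma deriv_lin A i j : (tnth (lin A) i)^`M(j) = (A i j)%:MP.
Proof.
rewrite tnth_mktuple raddf_sum (bigD1 j) //= big1 => [|k kj].
  by rewrite mderivZ mderivXU eqxx mpolyC1 -alg_mpolyC addr0.
by rewrite mderivZ mderivXU (negbTE kj) mpolyC0 scaler0.
Qed.

Lemma deriv_comp_lin A p j :
  (p \mPo lin A)^`M(j) = (\sum_i A i j *: p^`M(i)) \mPo lin A.
Proof.
rewrite chain raddf_sum; apply: eq_bigr => i _ /=.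
by rewrite deriv_lin comp_mpolyZ mulrC mul_mpolyC.
Qed.

Lemma comp_lin_lin A B p : (p \mPo lin A) \mPo lin B = p \mPo lin (A *m B).
Proof.
rewrite comp_assoc; congr (p \mPo _); apply: eq_from_tnth => i.
rewrite !tnth_mktuple raddf_sum /=.
under eq_bigr do rewrite comp_mpolyZ comp_mpolyXU -tnth_nth tnth_mktuple scaler_sumr.
rewrite exchange_big /=; apply: eq_bigr => l _.
by rewrite mxE scaler_suml; apply: eq_bigr => k _; rewrite scalerA.
Qed.

Lemma comp_lin1 p : p \mPo lin 1%:M = p.
Proof.
rewrite -[RHS](comp_mpoly_id p); congr (p \mPo _); apply: eq_from_tnth => i.
rewrite !tnth_mktuple (bigD1 i) //= big1 => [|k ki].
  by rewrite mxE eqxx scale1r addr0.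
by rewrite mxE eq_sym (negbTE ki) scale0r.
Qed.

Lemma deriv0_coef p i (m : 'X_{1..n}) : [pchar K] =i pred0 -> p^`M(i) = 0 -> (0 < m i)%N -> p@_m = 0.
Proof.
move=> ch0 hd hm.
have em : m = (m - U_(i) + U_(i))%MM.
  apply/mnmP => l; rewrite mnmDE mnmBE mnm1E.
  by case: eqP => [<-|_]; [rewrite subnK | rewrite subn0 addn0].
have := mcoeff_mderiv i p (m - U_(i))%MM; rewrite hd mcoeff0 -em.
move/esym/eqP; rewrite -mulr_natr mulf_eq0 => /orP [/eqP //|].
by move/(pcharf0P K): ch0 => ->.
Qed.

Lemma deg1 (l : {mpoly K[n]}) : (msize l <= 2)%N ->
  l = (l@_0%MM)%:MP + \sum_i l@_U_(i) *: 'X_i.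
Proof.
move=> hs; apply/mpolyP => m; rewrite mcoeffD mcoeffC raddf_sum /=.
under eq_bigr do rewrite mcoeffZ mcoeffX.
have [->|mn0] := eqVneq m 0%MM.
  rewrite mulr1 big1 ?addr0 // => i _.
  have : (U_(i) != 0)%MM by rewrite -mdeg_eq0 mdeg1.
  by move/negbTE => ->; rewrite mulr0.
rewrite mulr0 add0r.
have [/mdeg1P [j /eqP ->]|d1] := boolP (mdeg m == 1%N).
  rewrite (bigD1 j) //= eqxx mulr1 big1 ?addr0 // => i ij.
  suff -> : (U_(i) == U_(j))%MM = false by rewrite mulr0.
  apply/negbTE; apply: contra ij => /eqP e.
  have := congr1 (fun mm : 'X_{1..n} => mm i) e; rewrite /= !mnm1E eqxx.
  by case: eqP => [->|].
rewrite big1.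
  apply/eqP; rewrite mcoeff_eq0; apply: msize_mdeg_ge; apply: leq_trans hs _.
  move: mn0 d1; rewrite -mdeg_eq0; case: (mdeg m) => [|[|]] //.
move=> i _; suff -> : (U_(i) == m)%MM = false by rewrite mulr0.
apply/negbTE; apply: contra d1 => /eqP <-; by rewrite mdeg1.
Qed.

End Aux.
Arguments lin {K n}.
Arguments deriv_comp_lin {K n}.
Arguments comp_lin_lin {K n}.
Arguments comp_lin1 {K n}.
Arguments deriv0_coef {K n}.

Lemma main (K : fieldType) (n : nat) (f h : {mpoly K[n.+1]}) :
  [pchar K] =i pred0 ->
  tdeg (f - h) = 1%N ->
  (exists v : 'cV[K]_n.+1, jac_mul h v = 0 /\ jac_mul f v != 0) ->
  tame_coordinate f.
Proof.
move=> ch0 hd [v [hv hfv]].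
set l := f - h.
have hl : (msize l <= 2)%N by move: hd; rewrite /tdeg; case: (msize l) => [|[|[|]]].
set c := l@_0%MM.
set a := fun i => l@_U_(i).
have lE : l = c%:MP + \sum_i a i *: 'X_i := @deg1 K n.+1 l hl.
have dl i : l^`M(i) = (a i)%:MP.
  rewrite {1}lE mderivD mderivC add0r raddf_sum (bigD1 i) //= big1 => [|kk ki].
    by rewrite mderivZ mderivXU eqxx mpolyC1 -alg_mpolyC addr0.
  by rewrite mderivZ mderivXU (negbTE ki) mpolyC0 scaler0.
set lam := \sum_i v i 0 * a i.
have fE : f = h + l by rewrite /l addrC subrK.
have jf : jac_mul f v = lam%:MP.
  rewrite /jac_mul fE.
  under eq_bigr do rewrite mderivD scalerDr.
  rewrite big_split /=; move: hv; rewrite /jac_mul => ->; rewrite add0r /lam raddf_sum; apply: eq_bigr => i _.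
  by rewrite dl -mul_mpolyC -mpolyCM.
have lam0 : lam != 0 by move: hfv; rewrite jf mpolyC_eq0.
have /existsP [k hk] : [exists k, v k 0 * a k != 0].
  apply: contraR lam0 => /existsPn H; apply/eqP; rewrite /lam big1 // => i _.
  by apply/eqP; move: (H i); rewrite negbK.
set w := fun i => lam^-1 * v i 0.
have wk : w k != 0.
  by rewrite /w mulf_neq0 ?invr_eq0 //; move: hk; rewrite mulf_eq0 negb_or => /andP[].
set M : 'M[K]_n.+1 := \matrix_(i, j) (if j == k then w i else (i == j)%:R).
set Minv : 'M[K]_n.+1 := \matrix_(i, j) (if j == k then
   (if i == k then (w k)^-1 else - (w i / w k)) else (i == j)%:R).
have MU : M \in unitmx.
  suff : M *m Minv = 1%:M by case/mulmx1_unit.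
  apply/matrixP => i j; rewrite !mxE.
  under eq_bigr do rewrite !mxE.
  case: (eqVneq j k) => [->|jk].
    rewrite (bigD1 k) //= eqxx.
    rewrite (eq_bigr (fun l => - (i == l)%:R * (w l / w k))) => [|l0 lk]; last first.
      by rewrite (negbTE lk) mulrN mulNr.
    case: (eqVneq i k) => [->|ik].
      rewrite big1 => [|l0 lk]; last by rewrite eq_sym (negbTE lk) oppr0 mul0r.
      by rewrite mulfV // addr0.
    rewrite (bigD1 i ik) /= big1 => [|l0 /andP [_ li]]; last first.
      by rewrite eq_sym (negbTE li) oppr0 mul0r.
    by rewrite eqxx /= mulr1n mulN1r addr0 subrr.
  rewrite (bigD1 j) //= big1 => [|l0 lj]; last by rewrite (negbTE lj) mulr0.
  by rewrite (negbTE jk) eqxx mulr1 addr0.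
set s := tperm (ord0 : 'I_n.+1) k.
set A := col_perm s M.
have AU : A \in unitmx by rewrite /A col_permE unitmx_mul MU unitmx_perm.
have A0 i : A i ord0 = w i by rewrite /A mxE /M mxE tpermL eqxx.
set q := h \mPo lin A.
have q0 (m : 'X_{1..n.+1}) : (0 < m ord0)%N -> q@_m = 0.
  apply: deriv0_coef ch0 _; rewrite deriv_comp_lin.
  under eq_bigr do rewrite A0 -scalerA.
  by rewrite -scaler_sumr; move: hv; rewrite /jac_mul => ->; rewrite scaler0 raddf0.
set b := fun kk => \sum_i a i * A i kk.
have b0 : b ord0 = 1.
  rewrite /b (eq_bigr (fun i => lam^-1 * (v i 0 * a i))) => [|i _]; last first.
    by rewrite A0 /w; ring.
  by rewrite -mulr_sumr mulVf.
set r := q + c%:MP + \sum_(kk | kk != ord0) b kk *: 'X_kk.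
have fA : f \mPo lin A = 'X_ord0 + r.
  rewrite fE raddfD /= lE raddfD /= comp_mpolyC raddf_sum /=.
  have -> : \sum_i comp_mpoly (lin A) (a i *: 'X_i) = \sum_kk b kk *: 'X_kk.
    under eq_bigr do rewrite comp_mpolyZ comp_mpolyXU -tnth_nth tnth_mktuple scaler_sumr.
    rewrite exchange_big /=; apply: eq_bigr => kk _.
    by rewrite /b scaler_suml; apply: eq_bigr => i _; rewrite scalerA.
  rewrite (bigD1 ord0) //= b0 scale1r /r -/q; ring.
have rX (m : 'X_{1..n.+1}) : m \in msupp r -> m ord0 = 0%N.
  move=> hm; apply/eqP; rewrite -leqn0 leqNgt; apply/negP => pos; move: hm.
  rewrite mcoeff_msupp !mcoeffD q0 // mcoeffC raddf_sum /= big1 => [|kk kk0].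
    suff -> : (m == 0%MM) = false by rewrite mulr0 !addr0 eqxx.
    by apply/negbTE; apply: contraTneq pos => ->; rewrite mnm0E.
  rewrite mcoeffZ mcoeffX.
  suff -> : (U_(kk) == m)%MM = false by rewrite mulr0.
  by apply/negbTE; apply: contraTneq pos => <-; rewrite mnm1E (negbTE kk0).
set E : polymap K n.+1 := [tuple if j == ord0 then 'X_j + r else 'X_j | j < n.+1].
set B : polymap K n.+1 := lin (invmx A).
exists (pm_comp E (pm_comp B (pm_id K n.+1))), ord0; split.
  exists [:: E; B]; split => [G|//].
  rewrite !inE => /orP [/eqP ->|/eqP ->].
    right; exists ord0, r; split => //; split => [m|]; first exact: rX.
    split; first by rewrite tnth_mktuple eqxx.
    by move=> j /negbTE jn; rewrite tnth_mktuple jn.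
  left; exists (invmx A), (fun _ => 0); split; first by rewrite unitmx_inv.
  by move=> j; rewrite tnth_mktuple mpolyC0 addr0.
rewrite /pm_comp tnth_mktuple tnth_mktuple eqxx.
have -> : [tuple tnth B j \mPo pm_id K n.+1 | j < n.+1] = B.
  by apply: eq_from_tnth => j; rewrite tnth_mktuple /pm_id comp_mpoly_id.
by rewrite -fA comp_lin_lin mulmxV // comp_lin1.
Qed.

Theorem proposition5p6 (K : fieldType) (n : nat) (f h : {mpoly K[n]}) :
  [pchar K] =i pred0 ->
  tdeg (f - h) = 1%N ->
  (exists v : 'cV[K]_n, jac_mul h v = 0 /\ jac_mul f v != 0) ->
  tame_coordinate f.
Proof.
case: n f h => [|n] f h ch0 hd hv.
  exfalso; case: hv => v [_]; rewrite /jac_mul big_ord0; by rewrite eqxx.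
exact (@main K n f h ch0 hd hv).
Qed.
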